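(* Let $X$ be a finite dimensional real Hilbert space and $\bar{x}\in X$. Let $H_{1}\subset X$ be a closed halfspace and $x_{1}=P_{H_{1}}(\bar{x})$. Let $H_{2}\subset X$ be a closed halfspace with $H_{1}\cap H_{2}\neq\emptyset$, let $d=d(x_{1},H_{2})$, and let $x_{2}=P_{H_{1}\cap H_{2}}(\bar{x})$. Then $\|\bar{x}-x_{2}\|^{2}\geq\|\bar{x}-x_{1}\|^{2}+d^{2}$.
   Context: $P_{S}(y)$ denotes the (metric) projection of $y$ onto a nonempty closed convex set $S$, and $d(y,S)=\inf_{s\in S}\|y-s\|$. *)

(* Defs.v *)
From mathcomp Require Import all_boot all_order all_algebra.
From mathcomp Require Import all_classical all_reals.
Set Implicit Arguments. Unset Strict Implicit. Unset Printing Implicit Defensive.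
Import Order.TTheory GRing.Theory Num.Theory.
Local Open Scope ring_scope.
Local Open Scope classical_set_scope.

(* The finite-dimensional real Hilbert space X is modelled as R^n = 'rV[R]_n
   with the standard (Euclidean) inner product. *)
Definition dotv (R : realType) (n : nat) (u v : 'rV[R]_n) : R :=
  \sum_(i < n) u 0 i * v 0 i.

Definition enorm (R : realType) (n : nat) (u : 'rV[R]_n) : R :=
  Num.sqrt (dotv u u).

Definition closed_halfspace (R : realType) (n : nat) (H : set 'rV[R]_n) : Prop :=
  exists (a : 'rV[R]_n) (b : R), a != 0 /\ H = [set x | dotv a x <= b].

Definition dist_set (R : realType) (n : nat) (y : 'rV[R]_n) (S : set 'rV[R]_n) : R :=
  inf [set enorm (y - s) | s in S].

(* p = P_S(y): p is the (metric) projection of y onto S, i.e. p in S is a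
   nearest point of S to y (unique when S is nonempty closed convex). *)
Definition is_proj (R : realType) (n : nat) (S : set 'rV[R]_n) (y p : 'rV[R]_n) : Prop :=
  S p /\ forall s, S s -> enorm (y - p) <= enorm (y - s).

(* Main.v *)
Require Import Defs.
From mathcomp Require Import all_boot all_order all_algebra.
From mathcomp Require Import all_classical all_reals.
From mathcomp Require Import ring lra.
Import Order.TTheory GRing.Theory Num.Theory.
Local Open Scope ring_scope.
Local Open Scope classical_set_scope.

Set Implicit Arguments.
Section S.
Variables (R : realType) (n : nat).
Implicit Types u v w : 'rV[R]_n.

Lemma dotvC u v : dotv u v = dotv v u.
Proof. by apply: eq_bigr => i _; rewrite mulrC. Qed.

Lemma dotvDl u v w : dotv (u + v) w = dotv u w + dotv v w.
Proof. by rewrite /dotv -big_split; apply: eq_bigr => i _; rewrite mxE mulrDl. Qed.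

Lemma dotvZl (t : R) u w : dotv (t *: u) w = t * dotv u w.
Proof. by rewrite /dotv mulr_sumr; apply: eq_bigr => i _; rewrite mxE mulrA. Qed.

Lemma dotvNl u w : dotv (- u) w = - dotv u w.
Proof. by rewrite -scaleN1r dotvZl mulN1r. Qed.

Lemma dotvBl u v w : dotv (u - v) w = dotv u w - dotv v w.
Proof. by rewrite dotvDl dotvNl. Qed.

Lemma dotvBr u v w : dotv w (u - v) = dotv w u - dotv w v.
Proof. by rewrite dotvC dotvBl !(dotvC w). Qed.

Lemma dotvDr u v w : dotv w (u + v) = dotv w u + dotv w v.
Proof. by rewrite dotvC dotvDl !(dotvC w). Qed.

Lemma dotvZr (t : R) u w : dotv w (t *: u) = t * dotv w u.
Proof. by rewrite dotvC dotvZl dotvC. Qed.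

Lemma dotv_ge0 u : 0 <= dotv u u.
Proof. by apply: sumr_ge0 => i _; rewrite -expr2 sqr_ge0. Qed.

Lemma enorm_sq u : enorm u ^+ 2 = dotv u u.
Proof. by rewrite /enorm sqr_sqrtr // dotv_ge0. Qed.

Lemma enorm_ge0 u : 0 <= enorm u.
Proof. exact: sqrtr_ge0. Qed.

Lemma enorm_le u v : enorm u <= enorm v -> dotv u u <= dotv v v.
Proof. by move=> h; rewrite -!enorm_sq lerXn2r // ?nnegrE enorm_ge0. Qed.
Lemma expand u v (t : R) : dotv (u - t *: v) (u - t *: v) =
  dotv u u - 2 * t * dotv u v + t ^+ 2 * dotv v v.
Proof. rewrite dotvBl !dotvBr !dotvZl !dotvZr (dotvC v u); ring. Qed.
Lemma enormN u : enorm (- u) = enorm u.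
Proof. by rewrite /enorm dotvNl dotvC dotvNl opprK. Qed.
End S.

Theorem lemma2p5 (R : realType) (n : nat) (xbar : 'rV[R]_n)
  (H1 H2 : set 'rV[R]_n) (x1 x2 : 'rV[R]_n) :
  closed_halfspace H1 ->
  is_proj H1 xbar x1 ->
  closed_halfspace H2 ->
  H1 `&` H2 !=set0 ->
  is_proj (H1 `&` H2) xbar x2 ->
  enorm (xbar - x2) ^+ 2 >= enorm (xbar - x1) ^+ 2 + dist_set x1 H2 ^+ 2.
Proof.
move=> [a [b [_ ->]]] [Hx1 Hmin] _ _ [[Hx2a Hx2b] _].
set w := xbar - x1; set v := x2 - x1.
have key : forall t : R, 0 < t -> t < 1 -> 2 * dotv w v <= t * dotv v v.
  move=> t t0 t1.
  have Hy : dotv a (x1 + t *: v) <= b.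
    rewrite /v dotvDr dotvZr dotvBr.
    move: Hx1 Hx2a => /= h1 h2; nra.
  have := @enorm_le _ _ _ _ (Hmin _ Hy).
  have -> : xbar - (x1 + t *: v) = w - t *: v.
    by rewrite /w opprD addrA.
  rewrite (@expand _ _ w v t) => h.
  have : t * (2 * dotv w v) <= t * (t * dotv v v) by nra.
  by rewrite ler_pM2l.
have wv : dotv w v <= 0.
  rewrite leNgt; apply/negP => hp.
  have vv := @dotv_ge0 _ _ v.
  move: hp vv key; move: (dotv w v) (dotv v v) => p q hp vv key.
  have hpos : 0 < p + p + q by lra.
  set t := p / (p + p + q).
  have tq : t * (p + p + q) = p by rewrite /t mulfVK // gt_eqF.
  have t0 : 0 < t by rewrite divr_gt0.
  have t1 : t < 1 by rewrite /t ltr_pdivrMr // mul1r; lra.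
  have := key t t0 t1; nra.
have hE : [set enorm (x1 - s) | s in H2] !=set0 by exists (enorm (x1 - x2)), x2.
have hlb : lbound [set enorm (x1 - s) | s in H2] 0 by move=> _ [s _ <-]; exact: enorm_ge0.
have dle : dist_set x1 H2 <= enorm v.
  rewrite /dist_set; apply: ge_inf; first by exists 0.
  by exists x2 => //; rewrite /v -opprB enormN.
have d0 : 0 <= dist_set x1 H2 by apply: lb_le_inf.
have dsq : dist_set x1 H2 ^+ 2 <= dotv v v.
  by rewrite -enorm_sq lerXn2r // nnegrE enorm_ge0.
have -> : xbar - x2 = w - 1 *: v by rewrite scale1r /w /v opprB addrA subrK.
rewrite !enorm_sq (@expand _ _ w v 1); lra.
Qed.
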